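(* Let $P$ be an $(\epsilon_1,\epsilon_2)$-significant instance of $k$-means clustering with $z$ outliers and let $\eta,\delta,\xi\in(0,1)$. If one uniformly selects a set $S$ of $\max\{\frac{3k}{\delta^2\epsilon_1}\log\frac{2k}{\eta},\frac{k}{2\xi^2\epsilon_1(1-\delta)}\log\frac{2k}{\eta}\}$ points at random from $P$, then with probability at least $(1-\eta)^2$, for every $1\le j\le k$, $$\sum_{q\in S\cap C^*_j}\|q-o^*_j\|^2\le(1+\delta)\frac{|S|}{n}\Big(\sum_{p\in C^*_j}\|p-o^*_j\|^2+\xi|C^*_j|\mathcal{L}^2\Big).$$
   Context: $P\subset\mathbb{R}^D$, $|P|=n$, $0<z<n$. $P_{opt}\subset P$ with $|P_{opt}|=n-z$ is the set of inliers of an optimal solution of $k$-means clustering with $z$ outliers, and $C^*_1,\dots,C^*_k$ are the optimal clusters forming $P_{opt}$; $o^*_j$ is the mean of $C^*_j$; $\mathcal{L}=\max_l\max_{p,q\in C^*_l}\|p-q\|$. The instance is $(\epsilon_1,\epsilon_2)$-significant ($\epsilon_1,\epsilon_2>0$) if $\min_j|C^*_j|\ge\frac{\epsilon_1}{k}n$ and $z=\frac{\epsilon_2}{k}n$. Sampling uniformly at random means each sample point is drawn independently and uniformly from $P$; $S$ is a multiset and sums over $S\cap C^*_j$ count multiplicity. *)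

(* Defs.v *)
From HB Require Import structures.
From mathcomp Require Import all_boot all_order all_algebra.
From mathcomp Require Import reals exp.
Set Implicit Arguments. Unset Strict Implicit. Unset Printing Implicit Defensive.
Import Order.TTheory GRing.Theory Num.Theory.
Local Open Scope ring_scope.

Section Defs.
Variable R : realType.

Definition sqdist (D : nat) (u v : 'rV[R]_D) : R := \sum_(i < D) (u 0 i - v 0 i) ^+ 2.
Definition dist (D : nat) (u v : 'rV[R]_D) : R := Num.sqrt (sqdist u v).

Definition mean (n D : nat) (x : 'I_n -> 'rV[R]_D) (A : {set 'I_n}) : 'rV[R]_D :=
  (#|A|%:R)^-1 *: \sum_(p in A) x p.

Definition valid_clustering (n k z : nat) (C : 'I_k -> {set 'I_n}) : Prop :=
  (forall i j : 'I_k, i != j -> [disjoint C i & C j]) /\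
  #|\bigcup_(j < k) C j| = (n - z)%N.

(* k-means cost of a clustering: each cluster is served by its mean (optimal center) *)
Definition kmeans_cost (n D k : nat) (x : 'I_n -> 'rV[R]_D) (C : 'I_k -> {set 'I_n}) : R :=
  \sum_(j < k) \sum_(p in C j) sqdist (x p) (mean x (C j)).

Definition optimal_clustering (n D k z : nat) (x : 'I_n -> 'rV[R]_D)
    (C : 'I_k -> {set 'I_n}) : Prop :=
  valid_clustering z C /\
  forall C' : 'I_k -> {set 'I_n}, valid_clustering z C' -> kmeans_cost x C <= kmeans_cost x C'.

Definition max_diam (n D k : nat) (x : 'I_n -> 'rV[R]_D) (C : 'I_k -> {set 'I_n}) : R :=
  \big[Num.max/0]_(l < k) \big[Num.max/0]_(p in C l) \big[Num.max/0]_(q in C l)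
     dist (x p) (x q).

Definition significant (n k z : nat) (C : 'I_k -> {set 'I_n}) (eps1 eps2 : R) : Prop :=
  0 < eps1 /\ 0 < eps2 /\
  (forall j : 'I_k, eps1 / k%:R * n%:R <= #|C j|%:R) /\
  z%:R = eps2 / k%:R * n%:R.

(* probability of an event when m indices are drawn independently and uniformly
   from 'I_n (a sample is a function 'I_m -> 'I_n, all n^m of them equally likely) *)
Definition sample_prob (n m : nat) (E : {ffun 'I_m -> 'I_n} -> bool) : R :=
  #|[set s : {ffun 'I_m -> 'I_n} | E s]|%:R / (n ^ m)%:R.

End Defs.

(* Main.v *)
From HB Require Import structures.
From mathcomp Require Import all_boot all_order all_algebra.
Require Import Defs.
From mathcomp Require Import reals exp sequences.
From mathcomp Require Import ring lra.
Import Order.TTheory GRing.Theory Num.Theory.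
Local Open Scope ring_scope.

Lemma inner_sq (R : realType) (I : finType) (A : {set I}) (u : I -> R) (a : R) :
  \sum_(r in A) (a - u r) ^+ 2 =
  #|A|%:R * a ^+ 2 - 2 * a * \sum_(r in A) u r + \sum_(r in A) u r ^+ 2.
Proof.
rewrite (eq_bigr (fun r => a ^+ 2 - 2 * a * u r + u r ^+ 2)); last by move=> r _; ring.
rewrite big_split /= sumrB sumr_const -mulr_sumr mulr_natl.
by rewrite [in RHS]mulr_natl.
Qed.

Lemma cs_sum (R : realType) (I : finType) (A : {set I}) (u : I -> R) :
  (\sum_(q in A) u q) ^+ 2 <= #|A|%:R * \sum_(q in A) u q ^+ 2.
Proof.
have H : 0 <= \sum_(q in A) \sum_(r in A) (u q - u r) ^+ 2.
  by apply: sumr_ge0 => q _; apply: sumr_ge0 => r _; apply: sqr_ge0.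
rewrite (eq_bigr _ (fun q _ => @inner_sq R I A u (u q))) in H.
rewrite big_split /= sumrB sumr_const -mulr_sumr in H.
rewrite -mulr_suml -mulr_sumr -mulr_natl in H.
set S1 := \sum_(q in A) u q in H *.
set S2 := \sum_(q in A) u q ^+ 2 in H *.
nra.
Qed.



Lemma sqdist_mean_le (R : realType) n D (x : 'I_n -> 'rV[R]_D) (A : {set 'I_n}) (B : R) p :
  p \in A -> (forall q, q \in A -> sqdist (x p) (x q) <= B) ->
  sqdist (x p) (mean x A) <= B.
Proof.
move=> pA HB.
have c0 : (0 < #|A|)%N by apply/card_gt0P; exists p.
have c0R : (0 : R) < #|A|%:R by rewrite ltr0n.
set c := #|A|%:R in c0R *.
have E : forall i, x p 0 i - mean x A 0 i = c^-1 * \sum_(q in A) (x p 0 i - x q 0 i).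
  move=> i; rewrite /mean mxE summxE sumrB sumr_const -mulr_natl -/c.
  by field; rewrite gt_eqF.
rewrite /sqdist.
apply: (@le_trans _ _ (\sum_(i < D) c^-1 * \sum_(q in A) (x p 0 i - x q 0 i) ^+ 2)).
  apply: ler_sum => i _; rewrite E exprMn.
  have := @cs_sum R _ A (fun q => x p 0 i - x q 0 i) => /= H.
  have ci : 0 < c^-1 by rewrite invr_gt0.
  rewrite -/c in H.
  have -> : c^-1 * \sum_(q in A) (x p 0 i - x q 0 i) ^+ 2 =
     c^-1 ^+ 2 * (c * \sum_(q in A) (x p 0 i - x q 0 i) ^+ 2).
    by field; rewrite gt_eqF.
  by apply: ler_wpM2l => //; apply: sqr_ge0.
rewrite -mulr_sumr exchange_big /=.
apply: (@le_trans _ _ (c^-1 * \sum_(q in A) B)).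
  apply: ler_wpM2l; first by rewrite invr_ge0 ltW.
  by apply: ler_sum => q qA; apply: HB.
rewrite sumr_const -mulr_natl -/c.
by rewrite mulrA mulVf ?mul1r // gt_eqF.
Qed.

Lemma expR_le_inv (R : realType) (t : R) : t < 1 -> expR t <= (1 - t)^-1.
Proof.
move=> t1.
have h : (1 - t) * expR t <= 1.
  have := expR_ge1Dx (- t); rewrite expRN => h.
  have e0 := expR_gt0 t.
  rewrite -[X in _ <= X](@mulVf _ (expR t) (lt0r_neq0 e0)).
  by apply: ler_wpM2r => //; apply: ltW.
have a0 : 0 < 1 - t by rewrite subr_gt0.
have -> : expR t = (1 - t)^-1 * ((1 - t) * expR t) by field; rewrite gt_eqF.
rewrite -[X in _ <= X]mulr1; apply: ler_wpM2l => //.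
by rewrite invr_ge0 ltW.
Qed.

Lemma inv_le_lin (R : realType) (a b : R) : 0 < b -> b <= a -> a <= 1 -> a^-1 <= 1 + (1 - a) / b.
Proof.
move=> b0 ba a1.
have a0 : 0 < a by apply: lt_le_trans ba.
have -> : a^-1 = 1 + (1 - a) / b - (a - b) * (1 - a) / (a * b).
  by field; rewrite !gt_eqF.
rewrite lerBlDr lerDl; apply: divr_ge0; last by rewrite ltW // mulr_gt0.
by apply: mulr_ge0; rewrite subr_ge0.
Qed.

Lemma chernoff (R : realType) n m (y : 'I_n -> R) (B lam T : R) :
  0 <= lam -> (forall p, 0 <= y p <= B) -> lam * B < 1 ->
  #|[set s : {ffun 'I_m -> 'I_n} | T < \sum_(i < m) y (s i)]|%:R * expR (lam * T)
   <= (n%:R + lam / (1 - lam * B) * \sum_p y p) ^+ m.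
Proof.
move=> l0 hy lB.
set S := [set s : {ffun 'I_m -> 'I_n} | _].
rewrite mulr_natl -sumr_const.
have yB : forall p, lam * y p <= lam * B.
  by move=> p; apply: ler_wpM2l => //; case/andP: (hy p).
apply: (@le_trans _ _ (\sum_(s in S) expR (lam * \sum_(i < m) y (s i)))).
  apply: ler_sum => s; rewrite inE => hs.
  by rewrite ler_expR; apply: ler_wpM2l => //; apply: ltW.
apply: (@le_trans _ _ (\sum_(s : {ffun 'I_m -> 'I_n}) expR (lam * \sum_(i < m) y (s i)))).
  rewrite [X in _ <= X](bigID (fun s => s \in S)) /= lerDl.
  by apply: sumr_ge0 => s _; apply: ltW; apply: expR_gt0.
have -> : \sum_(s : {ffun 'I_m -> 'I_n}) expR (lam * \sum_(i < m) y (s i)) = \prod_(i < m) \sum_p expR (lam * y p).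
  rewrite bigA_distr_bigA /=; apply: eq_bigr => s _.
  by rewrite mulr_sumr expR_sum.
rewrite prodr_const card_ord.
apply: lerXn2r; rewrite ?nnegrE.
- by apply: sumr_ge0 => p _; apply: ltW; apply: expR_gt0.
- apply: addr_ge0 => //; apply: mulr_ge0; first apply: divr_ge0 => //; first by rewrite subr_ge0 ltW.
  by apply: sumr_ge0 => p _; case/andP: (hy p).
have -> : n%:R + lam / (1 - lam * B) * \sum_p y p = \sum_(p < n) (1 + (1 - (1 - lam * y p)) / (1 - lam * B)).
  rewrite big_split /= sumr_const card_ord mulr_sumr; congr (_ + _); apply: eq_bigr => p _.
  by ring.
apply: ler_sum => p _.
have h1 : lam * y p < 1 by apply: le_lt_trans (yB p) lB.
apply: (le_trans (@expR_le_inv R _ h1)).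
apply: (@inv_le_lin R); first by rewrite subr_gt0.
  by rewrite lerB.
by rewrite lerBlDr lerDl; apply: mulr_ge0 => //; case/andP: (hy p).
Qed.

Lemma pow_le_exp (R : realType) (N a : R) m : 0 < N -> 0 <= a ->
  (N + a) ^+ m <= N ^+ m * expR (m%:R * (a / N)).
Proof.
move=> N0 a0.
rewrite expRM_natl -exprMn.
apply: lerXn2r; rewrite ?nnegrE.
- by apply: addr_ge0 => //; apply: ltW.
- by apply: mulr_ge0; [apply: ltW | apply: ltW; apply: expR_gt0].
have -> : N + a = N * (1 + a / N) by field; rewrite gt_eqF.
by apply: ler_wpM2l; [apply: ltW | apply: expR_ge1Dx].
Qed.

Lemma diam_le (R : realType) n D k (x : 'I_n -> 'rV[R]_D) (C : 'I_k -> {set 'I_n}) j p q :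
  p \in C j -> q \in C j -> sqdist (x p) (x q) <= max_diam x C ^+ 2.
Proof.
move=> pC qC.
have d0 : 0 <= sqdist (x p) (x q) by apply: sumr_ge0 => i _; apply: sqr_ge0.
have h : dist (x p) (x q) <= max_diam x C.
  rewrite /max_diam.
  apply: le_trans (le_bigmax _ _ j).
  apply: le_trans (le_bigmax_cond _ _ pC).
  exact: (le_bigmax_cond _ _ qC).
rewrite -(sqr_sqrtr d0).
apply: lerXn2r; rewrite ?nnegrE ?sqrtr_ge0 //.
by apply: le_trans h; apply: sqrtr_ge0.
Qed.

Lemma cluster_bound (R : realType) n D (x : 'I_n -> 'rV[R]_D) k (C : 'I_k -> {set 'I_n}) j
    (delta xi L0 : R) m :
  (0 < n)%N -> 0 < delta -> 0 < xi -> L0 * n%:R <= delta * xi * #|C j|%:R * m%:R ->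
  #|[set s : {ffun 'I_m -> 'I_n} | ~~ (\sum_(i < m | s i \in C j) sqdist (x (s i)) (mean x (C j))
      <= (1 + delta) * (m%:R / n%:R) *
         (\sum_(p in C j) sqdist (x p) (mean x (C j)) + xi * #|C j|%:R * max_diam x C ^+ 2))]|%:R
   <= (n ^ m)%:R * expR (- L0).
Proof.
move=> n0 dl0 xi0 hL.
set B := max_diam x C ^+ 2.
set d := fun p => sqdist (x p) (mean x (C j)).
have dB : forall p, p \in C j -> d p <= B.
  move=> p pC; apply: (@sqdist_mean_le R n D x (C j) B p pC) => q qC; exact: (@diam_le R n D k x C j p q pC qC).
have d0 : forall p, 0 <= d p by move=> p; apply: sumr_ge0 => i _; apply: sqr_ge0.
have nR : (0 : R) < n%:R by rewrite ltr0n.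
set c := (#|C j|%:R : R).
have c0 : (0 : R) <= c by apply: ler0n.
rewrite -/d.
set A := \sum_(p in C j) d p.
have A0 : 0 <= A by apply: sumr_ge0.
set T := (1 + delta) * _ * _.
have T0 : 0 <= T.
  apply: mulr_ge0; first apply: mulr_ge0; first by apply: addr_ge0 => //; apply: ltW.
    by apply: divr_ge0; apply: ler0n.
  by apply: addr_ge0 => //; apply: mulr_ge0; [apply: mulr_ge0 => //; apply: ltW | apply: sqr_ge0].
case: (ltrP 0 B) => hB; last first.
  rewrite (_ : [set s | _] = set0) ?cards0 ?mul0r.
    by apply: mulr_ge0; [apply: ler0n | apply: ltW; apply: expR_gt0].
  apply/setP => s; rewrite !inE; apply/negbTE/negPn.
  apply: le_trans T0.
  by apply: sumr_le0 => i hi; apply: le_trans (dB _ hi) hB.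
set lam := delta / ((1 + delta) * B).
set y := fun p => if p \in C j then d p else 0.
have hy : forall p, 0 <= y p <= B.
  move=> p; rewrite /y; case: ifP => pC; first by rewrite d0 dB.
  by rewrite lexx ltW.
have d1 : 0 < 1 + delta by apply: addr_gt0.
have lB : lam * B = delta / (1 + delta) by rewrite /lam; field; rewrite !gt_eqF.
have lB1 : lam * B < 1 by rewrite lB ltr_pdivrMr // mul1r ltrDr.
have l0 : 0 <= lam by apply: divr_ge0; [apply: ltW | apply: mulr_ge0; apply: ltW].
have H := @chernoff R n m y B lam T l0 hy lB1.
have SA : \sum_p y p = A by rewrite /A [RHS]big_mkcond.
rewrite (_ : [set s | _] = [set s : {ffun 'I_m -> 'I_n} | T < \sum_(i < m) y (s i)]); last first.
  by apply/setP => s; rewrite !inE big_mkcond ltNge.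
rewrite SA in H.
have ll : lam / (1 - lam * B) = delta / B.
  rewrite lB /lam; field; rewrite ?addrK ?oner_neq0 // !gt_eqF //.
rewrite ll in H.
have a0 : 0 <= delta / B * A by apply: mulr_ge0 => //; apply: divr_ge0; apply: ltW.
have H2 := le_trans H (@pow_le_exp R n%:R (delta / B * A) m nR a0).
set F := #|_|%:R in H2 *.
have eF : F = F * expR (lam * T) * expR (- (lam * T)) by rewrite -mulrA -expRD subrr expR0 mulr1.
rewrite eF natrX.
apply: (le_trans (ler_wpM2r (ltW (expR_gt0 _)) H2)).
rewrite -[X in X <= _]mulrA -expRD; apply: ler_wpM2l; first by apply: exprn_ge0; apply: ltW.
rewrite ler_expR.
have -> : m%:R * (delta / B * A / n%:R) + - (lam * T) = - (delta * xi * c * m%:R / n%:R).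
  rewrite /lam /T; field; rewrite !gt_eqF //.
rewrite lerN2 ler_pdivlMr //.
Qed.


Theorem lemma4 (R : realType) (n D k z : nat) (x : 'I_n -> 'rV[R]_D)
    (C : 'I_k -> {set 'I_n}) (eps1 eps2 eta delta xi : R) (m : nat) :
  injective x ->
  (0 < k)%N -> (0 < z)%N -> (z < n)%N ->
  optimal_clustering z x C ->
  significant z C eps1 eps2 ->
  0 < eta < 1 -> 0 < delta < 1 -> 0 < xi < 1 ->
  let bound := Num.max (3 * k%:R / (delta ^+ 2 * eps1) * ln (2 * k%:R / eta))
                       (k%:R / (2 * xi ^+ 2 * eps1 * (1 - delta)) * ln (2 * k%:R / eta)) in
  bound <= m%:R < bound + 1 ->
  (1 - eta) ^+ 2 <=
  @sample_prob R n m (fun s : {ffun 'I_m -> 'I_n} =>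
    [forall j : 'I_k,
      \sum_(i < m | s i \in C j) sqdist (x (s i)) (mean x (C j))
      <= (1 + delta) * (m%:R / n%:R) *
         (\sum_(p in C j) sqdist (x p) (mean x (C j))
          + xi * #|C j|%:R * max_diam x C ^+ 2)]).
Proof.
move=> xinj k0 z0 zn opt [he1 [he2 [hsig hz]]] /andP[et0 et1] /andP[dl0 dl1] /andP[xi0 xi1] bound /andP[hb _].
have n0 : (0 < n)%N by apply: leq_ltn_trans zn.
have nR : (0 : R) < n%:R by rewrite ltr0n.
have kR : (0 : R) < k%:R by rewrite ltr0n.
have k1 : (1 : R) <= k%:R by rewrite ler1n.
set L0 := ln (2 * k%:R / eta).
have q1 : 1 < 2 * k%:R / eta by rewrite ltr_pdivlMr // mul1r; lra.
have L00 : 0 < L0 := ln_gt0 q1.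
have ebound : expR (- L0) = eta / (2 * k%:R).
  rewrite expRN /L0 lnK ?invf_div //.
  by rewrite posrE; apply: lt_trans q1.
move: hb; rewrite /bound ge_max -/L0 => /andP[h1 h2].
have hL : forall j, L0 * n%:R <= delta * xi * #|C j|%:R * m%:R.
  move=> j.
  have P1 : 3 * k%:R * L0 <= m%:R * (delta ^+ 2 * eps1).
    by move: h1; rewrite mulrAC ler_pdivrMr // mulr_gt0 // exprn_gt0.
  have P2 : k%:R * L0 <= m%:R * (2 * xi ^+ 2 * eps1 * (1 - delta)).
    move: h2; rewrite mulrAC ler_pdivrMr //.
    by rewrite !mulr_gt0 ?exprn_gt0 // subr_gt0.
  have P3 : eps1 * n%:R <= #|C j|%:R * k%:R.
    by move: (hsig j); rewrite mulrAC ler_pdivrMr.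
  have m0 : (0 : R) <= m%:R by apply: ler0n.
  have Q : k%:R * L0 <= m%:R * delta * xi * eps1.
    rewrite leNgt; apply/negP => hQ.
    have a0 : 0 <= m%:R * delta * xi * eps1 by rewrite !mulr_ge0 // ltW.
    have b0 : 0 < k%:R * L0 by apply: mulr_gt0.
    have sq : (m%:R * delta * xi * eps1) ^+ 2 < (k%:R * L0) ^+ 2.
      by rewrite ltr_pXn2r // ?nnegrE // ltW.
    have P12 : 3 * k%:R * L0 * (k%:R * L0) <= m%:R * (delta ^+ 2 * eps1) * (m%:R * (2 * xi ^+ 2 * eps1 * (1 - delta))).
      apply: ler_pM => //; first by rewrite !mulr_ge0 // ltW.
      by rewrite ltW.
    have t0 : 0 <= m%:R * (delta ^+ 2 * eps1) * (m%:R * (2 * xi ^+ 2 * eps1)) * delta.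
      by rewrite !mulr_ge0 // ?ltW // exprn_ge0 // ltW.
    nra.
  have : k%:R * L0 * n%:R <= m%:R * delta * xi * (#|C j|%:R * k%:R).
    apply: (le_trans (ler_wpM2r (ltW nR) Q)).
    have m3 : 0 <= m%:R * delta * xi by rewrite !mulr_ge0 // ltW.
    by have := ler_wpM2l m3 P3; rewrite !mulrA.
  move=> H; have : k%:R * (L0 * n%:R) <= k%:R * (delta * xi * #|C j|%:R * m%:R).
    by move: H; rewrite mulrA; congr (_ <= _); ring.
  by rewrite ler_pM2l.
rewrite /sample_prob.
set P := fun (j : 'I_k) (s : {ffun 'I_m -> 'I_n}) =>
  \sum_(i < m | s i \in C j) sqdist (x (s i)) (mean x (C j)) <=
        (1 + delta) * (m%:R / n%:R) *
        (\sum_(p in C j) sqdist (x p) (mean x (C j)) +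
         xi * #|C j|%:R * max_diam x C ^+ 2).
set E := [set s : {ffun 'I_m -> 'I_n} | [forall j, P j s]].
set F := fun j => [set s : {ffun 'I_m -> 'I_n} | ~~ P j s].
have cardE : (#|E| + #|~: E|)%N = (n ^ m)%N by rewrite cardsC card_ffun !card_ord.
have Fj : forall j, (#|F j|%:R : R) <= (n ^ m)%:R * expR (- L0).
  move=> j; apply: cluster_bound => //; exact: hL.
have Fb : (#|~: E|%:R : R) <= \sum_j (#|F j|%:R : R).
  have -> : (#|~: E|%:R : R) = \sum_(s in ~: E) 1 by rewrite sumr_const.
  apply: (@le_trans _ _ (\sum_(s in ~: E) \sum_j ((s \in F j)%:R : R))).
    apply: ler_sum => s; rewrite !inE => /forallPn [j0 hj0].
    rewrite (bigD1 j0) //= inE hj0 /= lerDl.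
    by apply: sumr_ge0 => i _; apply: ler0n.
  apply: (@le_trans _ _ (\sum_s \sum_j ((s \in F j)%:R : R))).
    rewrite [X in _ <= X](bigID (fun s => s \in ~: E)) /= lerDl.
    by apply: sumr_ge0 => s _; apply: sumr_ge0 => i _; apply: ler0n.
  rewrite exchange_big /=; apply: ler_sum => j _.
  rewrite -sumr_const [X in _ <= X]big_mkcond /=; rewrite le_eqVlt; apply/orP; left; apply/eqP; apply: eq_bigr => s _.
  by case: (s \in F j).
have N0 : (0 : R) < (n ^ m)%:R by rewrite ltr0n expn_gt0 n0.
have sumF : \sum_j (#|F j|%:R : R) <= k%:R * ((n ^ m)%:R * expR (- L0)).
  apply: (@le_trans _ _ (\sum_(j < k) ((n ^ m)%:R * expR (- L0)))).
    by apply: ler_sum => j _; apply: Fj.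
  by rewrite sumr_const card_ord [in X in _ <= X]mulr_natl.
have G2 : (#|~: E|%:R : R) <= (n ^ m)%:R * eta / 2.
  apply: (le_trans Fb); apply: (le_trans sumF).
  rewrite ebound le_eqVlt; apply/orP; left; apply/eqP.
  by field; rewrite gt_eqF.
have cE : (#|E|%:R : R) = (n ^ m)%:R - #|~: E|%:R by rewrite -cardE natrD addrK.
rewrite ler_pdivlMr // cE.
set N := ((n ^ m)%:R : R) in N0 G2 *.
set G := (#|~: E|%:R : R) in G2 *.
have h3 : (1 - eta) ^+ 2 <= 1 - eta / 2 by nra.
have := ler_wpM2r (ltW N0) h3.
lra.
Qed.
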